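(* Let $X$ be a real Hilbert space, $f:X\to\mathbb{R}$ a proper $\Phi_{lsc}$-convex function and $U\subset X$ open. If $f$ is twice continuously Fréchet differentiable on $U$, then $\partial_{lsc}f(x)\ne\emptyset$ for every $x\in U$.
   Context: $\Phi_{lsc}$ is the class of functions $\varphi(x)=-a\|x\|^2+\langle v,x\rangle+c$ ($a\ge0$, $v\in X^*$, $c\in\mathbb{R}$); $f$ is $\Phi_{lsc}$-convex if it is the pointwise supremum of the $\varphi\in\Phi_{lsc}$ with $\varphi\le f$; proper means at least one such $\varphi$ exists. $\partial_{lsc}f(x)$ is the set of $(a,v)\in\mathbb{R}_+\times X^*$ with $f(z)-f(x)\ge\langle v,z-x\rangle-a\|z\|^2+a\|x\|^2$ for all $z\in X$. *)

(* Defs.v *)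
From Stdlib Require Import Reals Lra.
Open Scope R_scope.

Record HilbertSpace := {
  hcar :> Type;
  hzero : hcar;
  hadd : hcar -> hcar -> hcar;
  hopp : hcar -> hcar;
  hscal : R -> hcar -> hcar;
  hinner : hcar -> hcar -> R;
  hadd_assoc : forall x y z, hadd x (hadd y z) = hadd (hadd x y) z;
  hadd_comm : forall x y, hadd x y = hadd y x;
  hadd_zero : forall x, hadd x hzero = x;
  hadd_opp : forall x, hadd x (hopp x) = hzero;
  hscal_one : forall x, hscal 1 x = x;
  hscal_assoc : forall a b x, hscal a (hscal b x) = hscal (a * b) x;
  hscal_distr_l : forall a x y, hscal a (hadd x y) = hadd (hscal a x) (hscal a y);
  hscal_distr_r : forall a b x, hscal (a + b) x = hadd (hscal a x) (hscal b x);
  hinner_sym : forall x y, hinner x y = hinner y x;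
  hinner_add_l : forall x y z, hinner (hadd x y) z = hinner x z + hinner y z;
  hinner_scal_l : forall a x y, hinner (hscal a x) y = a * hinner x y;
  hinner_pos : forall x, 0 <= hinner x x;
  hinner_def : forall x, hinner x x = 0 -> x = hzero;
  hcomplete : forall u : nat -> hcar,
    (forall eps, 0 < eps -> exists N, forall m n, (N <= m)%nat -> (N <= n)%nat ->
        sqrt (hinner (hadd (u m) (hopp (u n))) (hadd (u m) (hopp (u n)))) < eps) ->
    exists l, forall eps, 0 < eps -> exists N, forall n, (N <= n)%nat ->
        sqrt (hinner (hadd (u n) (hopp l)) (hadd (u n) (hopp l))) < eps
}.

Section HDefs.
Variable X : HilbertSpace.

Definition hsub (x y : X) : X := hadd X x (hopp X y).
Definition hnorm (x : X) : R := sqrt (hinner X x x).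

Definition is_dual (v : X -> R) : Prop :=
  (forall x y, v (hadd X x y) = v x + v y) /\
  (forall a x, v (hscal X a x) = a * v x) /\
  (exists M, forall x, Rabs (v x) <= M * hnorm x).

(** Continuous bilinear forms X x X -> R (= bounded operators X -> dual of X). *)
Definition is_bounded_bilinear (B : X -> X -> R) : Prop :=
  (forall k, is_dual (fun h => B h k)) /\
  (forall h, is_dual (B h)) /\
  (exists M, forall h k, Rabs (B h k) <= M * hnorm h * hnorm k).

Definition in_Phi_lsc (phi : X -> R) : Prop :=
  exists a v c, 0 <= a /\ is_dual v /\
    forall x, phi x = - a * (hnorm x) ^ 2 + v x + c.

Definition Phi_minorant (f : X -> R) (phi : X -> R) : Prop :=
  in_Phi_lsc phi /\ forall z, phi z <= f z.

Definition Phi_lsc_convex (f : X -> R) : Prop :=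
  forall x, is_lub (fun r => exists phi, Phi_minorant f phi /\ r = phi x) (f x).

Definition Phi_lsc_proper (f : X -> R) : Prop :=
  exists phi, Phi_minorant f phi.

Definition subdiff_lsc (f : X -> R) (x : X) (a : R) (v : X -> R) : Prop :=
  0 <= a /\ is_dual v /\
  forall z, f z - f x >= v (hsub z x) - a * (hnorm z) ^ 2 + a * (hnorm x) ^ 2.

Definition h_open (U : X -> Prop) : Prop :=
  forall x, U x -> exists r, 0 < r /\ forall y, hnorm (hsub y x) < r -> U y.

Definition C2_on (f : X -> R) (U : X -> Prop) : Prop :=
  exists (Df : X -> X -> R) (D2f : X -> X -> X -> R),
    (forall x, U x ->
       is_dual (Df x) /\ is_bounded_bilinear (D2f x) /\
       (forall eps, 0 < eps -> exists delta, 0 < delta /\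
          forall h, hnorm h < delta ->
            Rabs (f (hadd X x h) - f x - Df x h) <= eps * hnorm h) /\
       (* D2f x is the Frechet derivative of Df (in the dual) at x *)
       (forall eps, 0 < eps -> exists delta, 0 < delta /\
          forall h, hnorm h < delta -> forall k,
            Rabs (Df (hadd X x h) k - Df x k - D2f x h k) <= eps * hnorm h * hnorm k) /\
       (* D2f is continuous at x (operator norm) *)
       (forall eps, 0 < eps -> exists delta, 0 < delta /\
          forall y, U y -> hnorm (hsub y x) < delta -> forall h k,
            Rabs (D2f y h k - D2f x h k) <= eps * hnorm h * hnorm k)).

End HDefs.

(* Main.v *)
Require Import Defs.
From Stdlib Require Import Reals.
Open Scope R_scope.
From Stdlib Require Import Lra Psatz.

Lemma ip_add_r (X : HilbertSpace) (x y z : X) :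
  hinner X x (hadd X y z) = hinner X x y + hinner X x z.
Proof. rewrite !(hinner_sym X x), hinner_add_l; reflexivity. Qed.

Lemma ip_scal_r (X : HilbertSpace) a (x y : X) :
  hinner X x (hscal X a y) = a * hinner X x y.
Proof. rewrite !(hinner_sym X x), hinner_scal_l; reflexivity. Qed.

Lemma nrm_nonneg (X : HilbertSpace) (x : X) : 0 <= hnorm X x.
Proof. unfold hnorm; apply sqrt_pos. Qed.

Lemma nrm_sq (X : HilbertSpace) (x : X) : hnorm X x ^ 2 = hinner X x x.
Proof. unfold hnorm; apply pow2_sqrt, hinner_pos. Qed.

Lemma nrm_scal (X : HilbertSpace) a (x : X) : hnorm X (hscal X a x) = Rabs a * hnorm X x.
Proof.
  unfold hnorm. rewrite hinner_scal_l, ip_scal_r, <- Rmult_assoc.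
  rewrite sqrt_mult_alt by nra. f_equal. rewrite <- sqrt_Rsqr_abs. reflexivity.
Qed.

Lemma quad_disc A B p : 0 <= A -> 0 <= B ->
  (forall t, 0 <= A + 2 * t * p + t * t * B) -> p * p <= A * B.
Proof.
  intros HA HB H.
  destruct (Req_dec B 0) as [E|E].
  - subst. destruct (Req_dec p 0) as [Ep|Ep]; [subst; nra|].
    specialize (H (- (A + 1) / (2 * p))).
    replace (A + 2 * (- (A + 1) / (2 * p)) * p + - (A + 1) / (2 * p) * (- (A + 1) / (2 * p)) * 0)
      with (-1) in H by (field; auto). lra.
  - specialize (H (- p / B)).
    replace (A + 2 * (- p / B) * p + - p / B * (- p / B) * B) with ((A * B - p * p) / B) in H
      by (field; auto).
    assert (0 < B) by lra.
    assert (0 <= A * B - p * p); [|lra].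
    apply Rmult_le_reg_r with (/ B). apply Rinv_0_lt_compat; lra.
    rewrite Rmult_0_l. exact H.
Qed.

Lemma CS (X : HilbertSpace) (x y : X) : Rabs (hinner X x y) <= hnorm X x * hnorm X y.
Proof.
  assert (H : hinner X x y * hinner X x y <= hinner X x x * hinner X y y).
  { apply quad_disc; try apply hinner_pos. intro t.
    pose proof (hinner_pos X (hadd X x (hscal X t y))) as P.
    rewrite hinner_add_l, !ip_add_r, !hinner_scal_l, !ip_scal_r, (hinner_sym X y x) in P.
    nra. }
  unfold hnorm. rewrite <- sqrt_mult_alt by apply hinner_pos.
  rewrite <- sqrt_Rsqr_abs. apply sqrt_le_1_alt. unfold Rsqr. exact H.
Qed.

Lemma sub_add (X : HilbertSpace) (x h : X) : hsub X (hadd X x h) x = h.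
Proof.
  unfold hsub. rewrite (hadd_comm X x h), <- hadd_assoc, hadd_opp, hadd_zero. reflexivity.
Qed.

Lemma add_sub (X : HilbertSpace) (x z : X) : hadd X x (hsub X z x) = z.
Proof.
  unfold hsub. rewrite hadd_comm, <- hadd_assoc, (hadd_comm X (hopp X x) x), hadd_opp, hadd_zero.
  reflexivity.
Qed.

Lemma add_scal (X : HilbertSpace) (x h : X) t s :
  hadd X x (hscal X (t + s) h) = hadd X (hadd X x (hscal X t h)) (hscal X s h).
Proof. rewrite hscal_distr_r, hadd_assoc. reflexivity. Qed.

Lemma nrm_add_sq (X : HilbertSpace) (x h : X) :
  hnorm X (hadd X x h) ^ 2 = hnorm X x ^ 2 + 2 * hinner X x h + hnorm X h ^ 2.
Proof.
  rewrite !nrm_sq, hinner_add_l, !ip_add_r, (hinner_sym X h x). ring.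
Qed.

Lemma dual_comb (X : HilbertSpace) (v : X -> R) (x : X) c :
  is_dual X v -> is_dual X (fun k => v k + c * hinner X x k).
Proof.
  intros [Ha [Hs [M HM]]]. split; [|split].
  - intros. rewrite Ha, ip_add_r. ring.
  - intros. rewrite Hs, ip_scal_r. ring.
  - exists (M + Rabs c * hnorm X x). intro k.
    pose proof (HM k). pose proof (CS X x k). pose proof (nrm_nonneg X k).
    pose proof (Rabs_triang (v k) (c * hinner X x k)).
    rewrite Rabs_mult in H2.
    assert (Rabs c * Rabs (hinner X x k) <= Rabs c * (hnorm X x * hnorm X k)).
    { apply Rmult_le_compat_l; [apply Rabs_pos|auto]. }
    nra.
Qed.

Lemma abs_le2 a b : Rabs a <= b -> - b <= a <= b.
Proof. intro H. pose proof (Rle_abs a). pose proof (Rabs_Ropp a).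
  pose proof (Rle_abs (- a)). lra. Qed.

Lemma scal0 (X : HilbertSpace) (h : X) : hscal X 0 h = hzero X.
Proof.
  pose proof (hscal_distr_r X 0 0 h) as E. rewrite Rplus_0_r in E.
  assert (E2 : hadd X (hscal X 0 h) (hopp X (hscal X 0 h)) =
               hadd X (hadd X (hscal X 0 h) (hscal X 0 h)) (hopp X (hscal X 0 h))).
  { rewrite <- E. reflexivity. }
  rewrite <- hadd_assoc, hadd_opp, hadd_zero in E2. symmetry. exact E2.
Qed.

Lemma big_bound L C r n : 0 <= L -> 0 <= C -> 0 < r -> r <= n ->
  L * n + C <= (L / r + C / (r * r)) * (n * n).
Proof.
  intros HL HC Hr Hn.
  assert (1 <= n / r). { apply Rmult_le_reg_r with r; auto. field_simplify; lra. }
  replace ((L / r + C / (r * r)) * (n * n)) with (L * n * (n / r) + C * ((n / r) * (n / r)))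
    by (field; lra).
  assert (L * n <= L * n * (n / r)).
  { rewrite <- (Rmult_1_r (L * n)) at 1. apply Rmult_le_compat_l; nra. }
  assert (C <= C * ((n / r) * (n / r))).
  { rewrite <- (Rmult_1_r C) at 1. apply Rmult_le_compat_l; nra. }
  lra.
Qed.

Theorem mainTheorem7 (X : HilbertSpace) (f : X -> R) (U : X -> Prop) :
  Phi_lsc_proper X f -> Phi_lsc_convex X f -> h_open X U -> C2_on X f U ->
  forall x, U x -> exists (a : R) (v : X -> R), subdiff_lsc X f x a v.
Proof.
  intros [phi [[b [w [c [Hb [Hw Hphi]]]]] Hmin]] _ HU [Df [D2f HC]] x Ux.
  destruct (HU x Ux) as [r0 [Hr0 Hr0U]].
  destruct (HC x Ux) as [HDx [HBx [_ [H2 _]]]].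
  destruct (H2 1 Rlt_0_1) as [d1 [Hd1 Hd1']].
  destruct HBx as [_ [_ [M HM]]].
  pose proof HDx as [HDxa [HDxs [MD HMD]]].
  pose proof Hw as [Hwa [Hws [W HW]]].
  set (r := Rmin r0 d1).
  assert (Hr : 0 < r) by (unfold r; apply Rmin_pos; auto).
  set (K := Rabs M + 1).
  assert (Hder : forall h t0, U (hadd X x (hscal X t0 h)) ->
     derivable_pt_lim (fun t => f (hadd X x (hscal X t h))) t0
        (Df (hadd X x (hscal X t0 h)) h)).
  { intros h t0 Uy. set (y := hadd X x (hscal X t0 h)) in *.
    destruct (HC y Uy) as [[_ [HDys _]] [_ [HF _]]].
    set (n := hnorm X h). assert (Hn : 0 <= n) by apply nrm_nonneg.
    intros eps Heps.
    assert (He : 0 < eps / (n + 1)) by (apply Rdiv_lt_0_compat; lra).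
    destruct (HF _ He) as [d [Hd Hd']].
    assert (Hd2 : 0 < d / (n + 1)) by (apply Rdiv_lt_0_compat; lra).
    exists (mkposreal _ Hd2). intros s Hs0 Hs. simpl in Hs.
    rewrite add_scal. fold y.
    assert (Hsn : hnorm X (hscal X s h) < d).
    { rewrite nrm_scal. fold n.
      assert (Rabs s * (n + 1) < d).
      { apply Rmult_lt_reg_r with (/ (n + 1)). apply Rinv_0_lt_compat; lra.
        rewrite Rmult_assoc, Rinv_r by lra. lra. }
      pose proof (Rabs_pos s). nra. }
    specialize (Hd' _ Hsn). rewrite HDys, nrm_scal in Hd'. fold n in Hd'.
    assert (Has : 0 < Rabs s) by (apply Rabs_pos_lt; auto).
    replace ((f (hadd X y (hscal X s h)) - f y) / s - Df y h)
      with ((f (hadd X y (hscal X s h)) - f y - s * Df y h) / s) by (field; auto).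
    unfold Rdiv. rewrite Rabs_mult, Rabs_inv.
    apply Rle_lt_trans with (eps / (n + 1) * n).
    - apply Rmult_le_reg_r with (Rabs s); auto.
      rewrite Rmult_assoc, Rinv_l by lra. nra.
    - replace (eps / (n + 1) * n) with (eps - eps / (n + 1)) by (field; lra).
      lra. }
  assert (Hloc : forall h, hnorm X h < r ->
     f (hadd X x h) - f x - Df x h >= - K * hnorm X h ^ 2).
  { intros h Hh. set (n := hnorm X h) in *. assert (Hn : 0 <= n) by apply nrm_nonneg.
    assert (Hseg : forall t, 0 <= t <= 1 -> hnorm X (hscal X t h) <= n).
    { intros t Ht. rewrite nrm_scal. rewrite Rabs_right by lra. fold n. nra. }
    assert (Hr0' : r <= r0) by apply Rmin_l. assert (Hd1r : r <= d1) by apply Rmin_r.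
    assert (HUt : forall t, 0 <= t <= 1 -> U (hadd X x (hscal X t h))).
    { intros t Ht. apply Hr0U. rewrite sub_add. pose proof (Hseg t Ht). lra. }
    destruct (MVT_cor2 (fun t => f (hadd X x (hscal X t h)))
                (fun t => Df (hadd X x (hscal X t h)) h) 0 1 Rlt_0_1) as [t [Ht Htb]].
    { intros t Ht. apply Hder. apply HUt. exact Ht. }
    simpl in Ht. rewrite hscal_one, scal0, hadd_zero in Ht.
    assert (Hth : hnorm X (hscal X t h) < d1).
    { pose proof (Hseg t ltac:(lra)). lra. }
    specialize (Hd1' _ Hth h). pose proof (HM (hscal X t h) h) as HM1.
    pose proof (Hseg t ltac:(lra)) as Hs1.
    pose proof (nrm_nonneg X (hscal X t h)) as Hs2.
    fold n in Hd1', HM1.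
    assert (H0 : Rabs (D2f x (hscal X t h) h) <= Rabs M * hnorm X (hscal X t h) * n).
    { apply Rle_trans with (1 := HM1). apply Rmult_le_compat_r; auto.
      apply Rmult_le_compat_r; auto. apply Rle_abs. }
    apply abs_le2 in Hd1'. apply abs_le2 in H0.
    assert (Rabs M * hnorm X (hscal X t h) * n <= Rabs M * n * n).
    { apply Rmult_le_compat_r; auto. apply Rmult_le_compat_l; auto. apply Rabs_pos. }
    assert (1 * hnorm X (hscal X t h) * n <= 1 * n * n).
    { apply Rmult_le_compat_r; auto. lra. }
    unfold K. simpl. lra. }
  set (L := Rabs W + Rabs MD).
  set (C := Rabs (c + w x - 2 * b * hnorm X x ^ 2 - f x)).
  set (a := 2 * b + (L / r + C / (r * r)) + K).
  assert (HL : 0 <= L) by (unfold L; pose proof (Rabs_pos W); pose proof (Rabs_pos MD); lra).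
  assert (HCp : 0 <= C) by apply Rabs_pos.
  assert (HK : 0 <= K) by (unfold K; pose proof (Rabs_pos M); lra).
  assert (Hq : 0 <= L / r + C / (r * r)).
  { assert (0 <= L / r) by (unfold Rdiv; apply Rmult_le_pos; [auto|left; apply Rinv_0_lt_compat; auto]).
    assert (0 <= C / (r * r)) by (unfold Rdiv; apply Rmult_le_pos; [auto|left; apply Rinv_0_lt_compat; nra]). lra. }
  assert (Hkey : forall h, f (hadd X x h) - f x - Df x h >= - a * hnorm X h ^ 2).
  { intro h. set (n := hnorm X h). assert (Hn : 0 <= n) by apply nrm_nonneg.
    destruct (Rlt_or_le n r) as [Hlt|Hge].
    - pose proof (Hloc h Hlt). fold n in H. unfold a. nra.
    - pose proof (Hmin (hadd X x h)) as Hm. rewrite Hphi, Hwa in Hm.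
      pose proof (nrm_add_sq X x h) as E. fold n in E.
      pose proof (CS X x h) as Hcs. fold n in Hcs.
      pose proof (Rle_abs (hinner X x h)).
      pose proof (nrm_nonneg X x).
      pose proof (pow2_ge_0 (hnorm X x - n)).
      assert (hnorm X (hadd X x h) ^ 2 <= 2 * hnorm X x ^ 2 + 2 * n ^ 2)
        by (rewrite E; nra).
      pose proof (HW h) as HWh. fold n in HWh.
      pose proof (HMD h) as HMh. fold n in HMh.
      apply abs_le2 in HWh. apply abs_le2 in HMh.
      assert (W * n <= Rabs W * n) by (apply Rmult_le_compat_r; auto; apply Rle_abs).
      assert (MD * n <= Rabs MD * n) by (apply Rmult_le_compat_r; auto; apply Rle_abs).
      pose proof (abs_le2 _ _ (Rle_refl (Rabs (c + w x - 2 * b * hnorm X x ^ 2 - f x)))) as HC6.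
      pose proof (big_bound L C r n HL HCp Hr Hge).
      assert (b * hnorm X (hadd X x h) ^ 2 <= b * (2 * hnorm X x ^ 2 + 2 * n ^ 2))
        by (apply Rmult_le_compat_l; auto).
      assert (b * hnorm X (hadd X x h) ^ 2 <= 2 * b * hnorm X x ^ 2 + 2 * b * n ^ 2) by lra.
      assert (0 <= K * n ^ 2) by (apply Rmult_le_pos; auto; apply pow2_ge_0).
      replace (- a * n ^ 2) with (- (2 * b * n ^ 2) - (L / r + C / (r * r)) * (n * n) - K * n ^ 2)
        by (unfold a; ring).
      unfold L, C in *. lra. }
  exists a, (fun k => Df x k + (2 * a) * hinner X x k).
  split; [|split].
  - unfold a. pose proof Hq. nra.
  - apply dual_comb; auto.
  - intro z. set (h := hsub X z x).
    pose proof (Hkey h) as Hk. pose proof (nrm_add_sq X x h) as E.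
    unfold h in Hk, E |- *. rewrite add_sub in Hk, E. rewrite E. nra.
Qed.
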